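(* For any constants $z'\in[0,1]$ and $\alpha'>0$, the set $S_{z',\alpha'}=\{(x_1,\dots,x_n)\in[0,1]^n:\max_{i\in\mathcal V}|x_i-z'|<\alpha'\}$ is finite-time robustly reachable from $[0,1]^n$ under both control protocols (C1) and (C3).
   Context: Fix $n\ge3$, $\mathcal V=\{1,\dots,n\}$, confidence thresholds $r_i\in(0,1]$, belief factors $\omega_i\in(0,1)$, $\eta>0$. States $x(t)=(x_1(t),\dots,x_n(t))\in[0,1]^n$. Neighbor set $\mathcal N_i(t)=\{j:|x_j(t)-x_i(t)|\le r_i\}$ (contains $i$), $\Pi_{[0,1]}(y)=\min\{1,\max\{0,y\}\}$, $x_{\rm ave}(t)=\frac1n\sum_ix_i(t)$. Control protocol (C1): $x_i(t+1)=\Pi_{[0,1]}\big(|\mathcal N_i(t)|^{-1}\sum_{j\in\mathcal N_i(t)}x_j(t)+u_i(t)+b_i(t)\big)$. Control protocol (C3): $x_i(t+1)=\Pi_{[0,1]}\big(\omega_ix_{\rm ave}(t)+\frac{1-\omega_i}{|\mathcal N_i(t)|}\sum_{j\in\mathcal N_i(t)}x_j(t)+u_i(t)+b_i(t)\big)$. Here $\delta_i(t)\in(0,\eta)$ is a chosen parameter, $u_i(t)\in[-\eta+\delta_i(t),\eta-\delta_i(t)]$ a chosen control input, $b_i(t)\in[-\delta_i(t),\delta_i(t)]$ an arbitrary uncertainty; $\delta_i(t),u_i(t)$ may depend on $x(0),\dots,x(t)$. A set $S\subseteq[0,1]^n$ is finite-time robustly reachable from $[0,1]^n$ under a control protocol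 if there exist constants $T>0$ and $\varepsilon\in(0,\eta)$, independent of $x(0)$, such that for every $x(0)\in[0,1]^n$, either $x(0)\in S$, or one can choose $\delta_i(t)\in[\varepsilon,\eta)$ and $u_i(t)\in[-\eta+\delta_i(t),\eta-\delta_i(t)]$ for $i\in\mathcal V$, $0\le t<T$, guaranteeing that for arbitrary $b_i(t)\in[-\delta_i(t),\delta_i(t)]$ there is $t\in[1,T]$ with $x(t)\in S$. *)

(* Defs.v *)
From Stdlib Require Import Reals Lra Lia List.
Import ListNotations.
Open Scope R_scope.

(* A state x : nat -> R; only the coordinates i < n (agents 0..n-1,
   i.e. agents 1..n of the paper) are relevant. *)
Definition state := nat -> R.

Definition proj01 (y : R) : R := Rmin 1 (Rmax 0 y).

Definition in_box (n : nat) (x : state) : Prop :=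
  forall i, (i < n)%nat -> 0 <= x i <= 1.

Definition is_nbr (r : nat -> R) (x : state) (i j : nat) : bool :=
  if Rle_dec (Rabs (x j - x i)) (r i) then true else false.

Definition nbrs (n : nat) (r : nat -> R) (x : state) (i : nat) : list nat :=
  filter (is_nbr r x i) (seq 0 n).

Definition sumR (l : list R) : R := fold_right Rplus 0 l.

Definition nbr_avg (n : nat) (r : nat -> R) (x : state) (i : nat) : R :=
  sumR (map x (nbrs n r x i)) / INR (length (nbrs n r x i)).

Definition x_ave (n : nat) (x : state) : R :=
  sumR (map x (seq 0 n)) / INR n.

Inductive protocol := ProtC1 | ProtC3.

Definition step (p : protocol) (n : nat) (r omega : nat -> R)
    (x : state) (u b : nat -> R) : state :=
  fun i =>
    match p with
    | ProtC1 => proj01 (nbr_avg n r x i + u i + b i)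
    | ProtC3 => proj01 (omega i * x_ave n x + (1 - omega i) * nbr_avg n r x i
                    + u i + b i)
    end.

(* A (causal) feedback choice: given time t and the history
   h : nat -> state with h s = x(min s t), returns a value per agent. *)
Definition feedback := nat -> (nat -> state) -> nat -> R.

Fixpoint hist (p : protocol) (n : nat) (r omega : nat -> R) (x0 : state)
    (u : feedback) (b : nat -> nat -> R) (t : nat) : nat -> state :=
  match t with
  | O => fun _ => x0
  | S t' =>
      let H := hist p n r omega x0 u b t' in
      let xn := step p n r omega (H t') (u t' H) (b t') in
      fun s => if Nat.leb s t' then H s else xn
  end.

Definition traj p n r omega x0 u b (t : nat) : state :=
  hist p n r omega x0 u b t t.

Definition robustly_reachable (p : protocol) (n : nat) (r omega : nat -> R)
    (eta : R) (S : state -> Prop) : Prop :=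
  exists (T : nat) (eps : R),
    (1 <= T)%nat /\ 0 < eps < eta /\
    forall x0 : state, in_box n x0 ->
      S x0 \/
      exists delta u : feedback,
        (forall t h i, (t < T)%nat -> (i < n)%nat ->
            eps <= delta t h i < eta /\
            - eta + delta t h i <= u t h i <= eta - delta t h i) /\
        forall b : nat -> nat -> R,
          (forall t i, (t < T)%nat -> (i < n)%nat ->
             - delta t (hist p n r omega x0 u b t) i <= b t i
             <= delta t (hist p n r omega x0 u b t) i) ->
          exists t, (1 <= t <= T)%nat /\ S (traj p n r omega x0 u b t).

Definition S_set (n : nat) (z alpha : R) (x : state) : Prop :=
  in_box n x /\ forall i, (i < n)%nat -> Rabs (x i - z) < alpha.

(* Main.v *)
Require Import Defs.
From Stdlib Require Import Reals List.
From Stdlib Require Import Lra Lia.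
Open Scope R_scope.

Definition pre (p : protocol) (n : nat) (r omega : nat -> R) (x : state) (i : nat) : R :=
  match p with
  | ProtC1 => nbr_avg n r x i
  | ProtC3 => omega i * x_ave n x + (1 - omega i) * nbr_avg n r x i
  end.

Lemma step_pre p n r omega x u b i :
  step p n r omega x u b i = proj01 (pre p n r omega x i + u i + b i).
Proof. destruct p; reflexivity. Qed.

Lemma traj_S p n r omega x0 u b t :
  traj p n r omega x0 u b (S t) =
  step p n r omega (traj p n r omega x0 u b t) (u t (hist p n r omega x0 u b t)) (b t).
Proof.
  unfold traj. cbn [hist]. cbv zeta.
  assert (E : Nat.leb (S t) t = false) by (apply Nat.leb_gt; lia).
  rewrite E. reflexivity.
Qed.

Lemma proj01_box y : 0 <= proj01 y <= 1.
Proof. unfold proj01, Rmin, Rmax; repeat destruct Rle_dec; lra. Qed.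

Lemma proj01_lip y z : 0 <= z <= 1 -> Rabs (proj01 y - z) <= Rabs (y - z).
Proof.
  intros Hz. unfold proj01, Rmin, Rmax; repeat destruct Rle_dec;
  unfold Rabs; repeat destruct Rcase_abs; lra.
Qed.

Lemma sum_bound (x : state) z D (l : list nat) :
  (forall j, In j l -> Rabs (x j - z) <= D) ->
  Rabs (sumR (map x l) - INR (length l) * z) <= INR (length l) * D.
Proof.
  induction l as [|j l IH]; intros H.
  - simpl. rewrite Rmult_0_l, Rminus_0_r, Rabs_R0. lra.
  - simpl length. rewrite S_INR. simpl map. simpl sumR.
    assert (H1 := H j (or_introl eq_refl)).
    assert (H2 := IH (fun k hk => H k (or_intror hk))).
    replace (x j + sumR (map x l) - (INR (length l) + 1) * z)
      with ((x j - z) + (sumR (map x l) - INR (length l) * z)) by ring.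
    eapply Rle_trans; [apply Rabs_triang|]. lra.
Qed.

Lemma avg_bound (x : state) z D (l : list nat) :
  (length l > 0)%nat ->
  (forall j, In j l -> Rabs (x j - z) <= D) ->
  Rabs (sumR (map x l) / INR (length l) - z) <= D.
Proof.
  intros Hl H. assert (Hp : 0 < INR (length l)) by (apply lt_0_INR; lia).
  assert (HB := sum_bound x z D l H).
  replace (sumR (map x l) / INR (length l) - z)
    with ((sumR (map x l) - INR (length l) * z) / INR (length l)) by (field; lra).
  unfold Rdiv. rewrite Rabs_mult, Rabs_inv, (Rabs_right (INR _)) by lra.
  apply (Rmult_le_reg_r (INR (length l))); [lra|].
  rewrite Rmult_assoc, Rinv_l by lra. lra.
Qed.

Lemma pre_bound p n r omega x z D i :
  (0 < n)%nat -> (i < n)%nat -> 0 < r i -> 0 < omega i < 1 ->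
  (forall j, (j < n)%nat -> Rabs (x j - z) <= D) ->
  Rabs (pre p n r omega x i - z) <= D.
Proof.
  intros Hn Hi Hr Ho H.
  assert (HN : Rabs (nbr_avg n r x i - z) <= D).
  { unfold nbr_avg. apply avg_bound.
    - assert (In i (nbrs n r x i)).
      { unfold nbrs. apply filter_In. split.
        - apply in_seq. lia.
        - unfold is_nbr. destruct Rle_dec as [|n0]; [reflexivity|].
          exfalso. apply n0. replace (x i - x i) with 0 by ring.
          rewrite Rabs_R0. lra. }
      destruct (nbrs n r x i); [contradiction|simpl; lia].
    - intros j Hj. unfold nbrs in Hj. apply filter_In in Hj.
      destruct Hj as [Hj _]. apply in_seq in Hj. apply H. lia. }
  destruct p; simpl; [exact HN|].
  assert (HA : Rabs (x_ave n x - z) <= D).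
  { unfold x_ave. pose proof (avg_bound x z D (seq 0 n)) as HH.
    rewrite length_seq in HH. apply HH; [lia|].
    intros j Hj. apply in_seq in Hj. apply H. lia. }
  replace (omega i * x_ave n x + (1 - omega i) * nbr_avg n r x i - z)
    with (omega i * (x_ave n x - z) + (1 - omega i) * (nbr_avg n r x i - z)) by ring.
  eapply Rle_trans; [apply Rabs_triang|].
  rewrite !Rabs_mult, (Rabs_right (omega i)), (Rabs_right (1 - omega i)) by lra.
  assert (omega i * Rabs (x_ave n x - z) <= omega i * D) by (apply Rmult_le_compat_l; lra).
  assert ((1 - omega i) * Rabs (nbr_avg n r x i - z) <= (1 - omega i) * D) by (apply Rmult_le_compat_l; lra).
  lra.
Qed.

Definition clampu (c y : R) : R := Rmax (- c) (Rmin c y).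

Lemma clamp_bound a z c : 0 <= c ->
  Rabs (a + clampu c (z - a) - z) <= Rmax 0 (Rabs (a - z) - c) /\
  - c <= clampu c (z - a) <= c.
Proof.
  intros Hc. unfold clampu, Rmax, Rmin; repeat destruct Rle_dec;
  unfold Rabs in *; repeat destruct Rcase_abs; split; lra.
Qed.

Lemma reach p n r omega eta z alpha :
  (3 <= n)%nat ->
  (forall i, (i < n)%nat -> 0 < r i <= 1) ->
  (forall i, (i < n)%nat -> 0 < omega i < 1) ->
  0 < eta ->
  0 <= z <= 1 -> 0 < alpha ->
  robustly_reachable p n r omega eta (S_set n z alpha).
Proof.
  intros Hn Hr Ho Heta Hz Ha.
  set (eps := Rmin (eta / 4) (alpha / 2)).
  assert (He1 : 0 < eps) by (unfold eps, Rmin; destruct Rle_dec; lra).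
  assert (He2 : eps <= eta / 4) by apply Rmin_l.
  assert (He3 : eps <= alpha / 2) by apply Rmin_r.
  set (k := eta - 2 * eps).
  set (c := eta - eps).
  destruct (INR_archimed k 1) as [N HN]; [unfold k; lra|].
  exists (S N), eps. split; [lia|]. split; [lra|].
  intros x0 Hx0. right.
  exists (fun _ _ _ => eps).
  exists (fun t h i => clampu c (z - pre p n r omega (h t) i)).
  split.
  { intros t h i _ _. split; [lra|].
    destruct (clamp_bound (pre p n r omega (h t) i) z c) as [_ HH]; [unfold c; lra|].
    assert (c = eta - eps) by reflexivity. lra. }
  intros b Hb. exists (S N). split; [lia|].
  set (B := fun t : nat => Rmax eps (1 - INR t * k)).
  assert (Inv : forall t, (t <= S N)%nat -> forall i, (i < n)%nat ->
            Rabs (traj p n r omega x0 (fun t h i => clampu c (z - pre p n r omega (h t) i)) b t i - z) <= B t).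
  { induction t as [|t IH]; intros Ht i Hi.
    - unfold traj; simpl. unfold B. simpl. rewrite Rmult_0_l, Rminus_0_r.
      specialize (Hx0 i Hi). eapply Rle_trans; [|apply Rmax_r].
      unfold Rabs; destruct Rcase_abs; lra.
    - rewrite traj_S, step_pre.
      set (x := traj p n r omega x0 _ b t).
      assert (Hpre : Rabs (pre p n r omega x i - z) <= B t).
      { apply pre_bound; try lia; try (apply Hr; lia); try (apply Ho; lia).
        intros j Hj. apply IH; [lia|exact Hj]. }
      assert (Hbt := Hb t i ltac:(lia) Hi). cbv beta in Hbt.
      unfold traj in x. fold x.
      change (hist p n r omega x0 (fun t h i => clampu c (z - pre p n r omega (h t) i)) b t t) with x.
      eapply Rle_trans; [apply proj01_lip; exact Hz|].
      destruct (clamp_bound (pre p n r omega x i) z c) as [Hc _]; [unfold c; lra|].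
      replace (pre p n r omega x i + clampu c (z - pre p n r omega x i) + b t i - z)
        with ((pre p n r omega x i + clampu c (z - pre p n r omega x i) - z) + b t i) by ring.
      eapply Rle_trans; [apply Rabs_triang|].
      assert (Rabs (b t i) <= eps) by (apply Rabs_le; lra).
      unfold B in *. rewrite S_INR.
      revert Hc Hpre. unfold c, k, Rmax.
      repeat destruct Rle_dec; intros; lra. }
  split.
  - intros i Hi. rewrite traj_S, step_pre. apply proj01_box.
  - intros i Hi. eapply Rle_lt_trans; [apply Inv; lia|].
    unfold B. rewrite S_INR.
    assert (1 - (INR N + 1) * k < eps) by (assert (0 < k) by (unfold k; lra); nra).
    unfold Rmax. destruct Rle_dec; lra.
Qed.

Theorem lemma2 (n : nat) (r omega : nat -> R) (eta z alpha : R) :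
  (3 <= n)%nat ->
  (forall i, (i < n)%nat -> 0 < r i <= 1) ->
  (forall i, (i < n)%nat -> 0 < omega i < 1) ->
  0 < eta ->
  0 <= z <= 1 -> 0 < alpha ->
  robustly_reachable ProtC1 n r omega eta (S_set n z alpha) /\
  robustly_reachable ProtC3 n r omega eta (S_set n z alpha).
Proof.
  intros. split; apply reach; assumption.
Qed.
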